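(* Let $q>0$, $q\neq1$, $M\ge2$, and let $G_q=SO_q(N)$ ($N\ge3$) or $Sp_q(n)$ ($N=2n$, $n\ge2$) with braid matrix $\hat R$, and $\hat R_M$ the braid matrix of $SL_q(M)$. Then each of $\hat R_M\otimes\hat R$ and $\hat R_M^{-1}\otimes\hat R$ has at least two distinct positive and at least two distinct negative eigenvalues (namely $q^2,q^{-2},-1,\pm q^{2-N},\mp q^{-N}$ for $\hat R_M\otimes\hat R$ and $-q^2,-q^{-2},1,\mp q^{2-N},\pm q^{-N}$ for $\hat R_M^{-1}\otimes\hat R$, upper signs for $SO_q(N)$, lower for $Sp_q(n)$). Consequently, by Lemma 1, there is no $GL_q(M)\times G_q$-covariant $q$-deformed Weyl or Clifford algebra with generators $A^A,A^+_A$ ($A=(\alpha,a)$) built from $\hat{\mathsf R}=\hat R_M^{\pm1}\otimes\hat R$ in the manner of Lemma 1 that has the same Poincaré series as its classical counterpart.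
   Context: For $SO_q(N)$: $\hat R=q\mathcal P^s-q^{-1}\mathcal P^a+q^{1-N}\mathcal P^t$; for $Sp_q(n)$: $\hat R=q\mathcal P^{s'}-q^{-1}\mathcal P^{a'}-q^{1-N}\mathcal P^{t'}$ (orthogonal projectors summing to the identity); $\hat R_M=q\mathcal P^S_M-q^{-1}\mathcal P^A_M$; $(X_M\otimes Y)^{AB}_{CD}=(X_M)^{\alpha\beta}_{\gamma\delta}Y^{ab}_{cd}$, and products of these projectors are the spectral projectors of $\hat R_M^{\pm1}\otimes\hat R$. Lemma 1: given a braid matrix $\hat{\mathsf R}=\sum_\mu\lambda_\mu\mathsf P^\mu$ (distinct $\lambda_\mu$), an algebra with relations $\sum(\mathsf P^\mp)^{CD}_{AB}A^+_CA^+_D=0$, $\sum(\mathsf P^\mp)^{AB}_{CD}A^DA^C=0$, $A^AA^+_B=\delta^A_B\mathbf 1\pm\sum S^{AC}_{BD}A^+_CA^D$ ($S$ numerical, $\mathsf P^\pm$ = sums of spectral projectors with positive/negative eigenvalue; upper sign Weyl, lower Clifford) can have the classical Poincaré series only if $\hat{\mathsf R}$ has exactly one negative (Weyl) resp. exactly one positive (Clifford) eigenvalue. *)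

(* Defs.v *)
From HB Require Import structures.
From mathcomp Require Import all_boot all_order all_algebra.
Set Implicit Arguments. Unset Strict Implicit. Unset Printing Implicit Defensive.
Import Order.TTheory GRing.Theory Num.Theory.
Local Open Scope ring_scope.

(* Linear operators on the space R^I, I a finite index type, given by their
   matrix entries: (A v)_i = \sum_j A i j * v j. *)
Definition op (R : pzRingType) (I : finType) := I -> I -> R.

Section Ops.
Variables (R : realFieldType) (I : finType).

Definition opmul (A B : op R I) : op R I := fun i k => \sum_j A i j * B j k.
Definition opid : op R I := fun i j => (i == j)%:R.
Definition opzero : op R I := fun _ _ => 0.
Definition optrace (A : op R I) : R := \sum_i A i i.

Definition is_eigenvalue (A : op R I) (l : R) : Prop :=
  exists v : I -> R, (exists i, v i != 0) /\
    forall i, \sum_j A i j * v j = l * v i.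

Definition proj_family2 (P1 P2 : op R I) : Prop :=
  [/\ opmul P1 P1 = P1, opmul P2 P2 = P2,
      opmul P1 P2 = opzero, opmul P2 P1 = opzero &
      (fun i j => P1 i j + P2 i j) = opid].

Definition proj_family3 (P1 P2 P3 : op R I) : Prop :=
  [/\ opmul P1 P1 = P1, opmul P2 P2 = P2, opmul P3 P3 = P3,
      (opmul P1 P2 = opzero /\ opmul P2 P1 = opzero /\
       opmul P1 P3 = opzero /\ opmul P3 P1 = opzero /\
       opmul P2 P3 = opzero /\ opmul P3 P2 = opzero) &
      (fun i j => P1 i j + P2 i j + P3 i j) = opid].

Definition two_pos_eigenvalues (A : op R I) : Prop :=
  exists l1 l2, [/\ l1 != l2, 0 < l1, 0 < l2, is_eigenvalue A l1 & is_eigenvalue A l2].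
Definition two_neg_eigenvalues (A : op R I) : Prop :=
  exists l1 l2, [/\ l1 != l2, l1 < 0, l2 < 0, is_eigenvalue A l1 & is_eigenvalue A l2].

(* The spectral condition of Lemma 1 (necessary for the classical Poincare
   series): exactly one negative eigenvalue (Weyl), exactly one positive
   eigenvalue (Clifford). *)
Definition lemma1_weyl_condition (A : op R I) : Prop :=
  exists! l, l < 0 /\ is_eigenvalue A l.
Definition lemma1_clifford_condition (A : op R I) : Prop :=
  exists! l, 0 < l /\ is_eigenvalue A l.
End Ops.
Arguments opid {R I}.
Arguments opzero {R I}.

(* V (x) V for V of dimension N: indices (a,b) *)
Definition V2 (N : nat) : finType := ('I_N * 'I_N)%type.

(* Tensor product with the paper's index convention A = (alpha, a):
   (X (x) Y)^{AB}_{CD} = X^{alpha beta}_{gamma delta} Y^{ab}_{cd}. *)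
Definition tens (R : pzRingType) (M N : nat) (X : op R (V2 M)) (Y : op R (V2 N)) :
  op R (('I_M * 'I_N) * ('I_M * 'I_N))%type :=
  fun AB CD =>
    let: ((al, a), (be, b)) := AB in
    let: ((ga, c), (de, d)) := CD in
    X (al, be) (ga, de) * Y (a, b) (c, d).

Inductive qgroup := SOq | Spq.

Definition qsgn (R : pzRingType) (k : qgroup) : R :=
  if k is SOq then 1 else -1.

Definition dim_ok (k : qgroup) (N : nat) : Prop :=
  match k with
  | SOq => (3 <= N)%N
  | Spq => exists n, (2 <= n)%N /\ N = (2 * n)%N
  end.

(* ranks (= traces) of the projectors P^s, P^a, P^t (resp. P^s', P^a', P^t') *)
Definition rank_s (k : qgroup) (N : nat) : nat :=
  if k is SOq then ((N * N.+1) %/ 2).-1 else (N * N.+1) %/ 2.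
Definition rank_a (k : qgroup) (N : nat) : nat :=
  if k is SOq then (N * N.-1) %/ 2 else ((N * N.-1) %/ 2).-1.

(* Main.v *)
Require Import Defs.
From Stdlib Require Import FunctionalExtensionality.
From mathcomp Require Import ring zify.
From HB Require Import structures.
From mathcomp Require Import all_boot all_order all_algebra.
Import Order.TTheory GRing.Theory Num.Theory.
Local Open Scope ring_scope.
Set Implicit Arguments. Unset Strict Implicit.

Section S.
Variable R : realFieldType.

Lemma sum_tens (M N : nat) (f : V2 M -> R) (g : V2 N -> R) :
 \sum_(x : ('I_M*'I_N)*('I_M*'I_N)) f (x.1.1, x.2.1) * g (x.1.2, x.2.2)
 = (\sum_y f y) * (\sum_z g z).
Proof.
pose h (p : V2 M * V2 N) : ('I_M*'I_N)*('I_M*'I_N) := ((p.1.1, p.2.1), (p.1.2, p.2.2)).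
pose h' (x : ('I_M*'I_N)*('I_M*'I_N)) : V2 M * V2 N := ((x.1.1, x.2.1), (x.1.2, x.2.2)).
rewrite (reindex h); last first.
  by apply: onW_bij; exists h' => -[[a b] [c d]].
rewrite big_distrl /=.
under [RHS]eq_bigr do rewrite big_distrr.
rewrite pair_bigA /=.
by apply: eq_bigr => -[[a b] [c d]].
Qed.

Lemma tensE M N (X : op R (V2 M)) (Y : op R (V2 N)) x y :
  tens X Y x y = X (x.1.1, x.2.1) (y.1.1, y.2.1) * Y (x.1.2, x.2.2) (y.1.2, y.2.2).
Proof. by case: x => [[? ?] [? ?]]; case: y => [[? ?] [? ?]]. Qed.

Lemma tens_mul M N (A C : op R (V2 M)) (B D : op R (V2 N)) x z :
  opmul (tens A B) (tens C D) x z = tens (opmul A C) (opmul B D) x z.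
Proof.
rewrite /opmul tensE -sum_tens; apply: eq_bigr => y _.
by rewrite !tensE /= mulrACA.
Qed.
Section L.
Variable (I : finType).
Implicit Types (A B X P : op R I).

Lemma pw A B : A = B -> forall i j, A i j = B i j. Proof. by move->. Qed.

Lemma lin2r X A P1 P2 a1 a2 :
  (forall i j, A i j = a1 * P1 i j + a2 * P2 i j) ->
  forall i k, opmul X A i k = a1 * opmul X P1 i k + a2 * opmul X P2 i k.
Proof.
move=> HA i k; rewrite /opmul !big_distrr -big_split /=.
by apply: eq_bigr => j _; rewrite HA mulrDr; congr (_ + _); rewrite mulrCA.
Qed.

Lemma lin2l X A P1 P2 a1 a2 :
  (forall i j, A i j = a1 * P1 i j + a2 * P2 i j) ->
  forall i k, opmul A X i k = a1 * opmul P1 X i k + a2 * opmul P2 X i k.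
Proof.
move=> HA i k; rewrite /opmul !big_distrr -big_split /=.
by apply: eq_bigr => j _; rewrite HA mulrDl; congr (_ + _); rewrite mulrA.
Qed.

Lemma lin3r X A P1 P2 P3 a1 a2 a3 :
  (forall i j, A i j = a1 * P1 i j + a2 * P2 i j + a3 * P3 i j) ->
  forall i k, opmul X A i k = a1 * opmul X P1 i k + a2 * opmul X P2 i k + a3 * opmul X P3 i k.
Proof.
move=> HA i k; rewrite /opmul !big_distrr -!big_split /=.
by apply: eq_bigr => j _; rewrite HA !mulrDr; congr (_ + _ + _); rewrite mulrCA.
Qed.

Lemma lin3l X A P1 P2 P3 a1 a2 a3 :
  (forall i j, A i j = a1 * P1 i j + a2 * P2 i j + a3 * P3 i j) ->
  forall i k, opmul A X i k = a1 * opmul P1 X i k + a2 * opmul P2 X i k + a3 * opmul P3 X i k.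
Proof.
move=> HA i k; rewrite /opmul !big_distrr -!big_split /=.
by apply: eq_bigr => j _; rewrite HA !mulrDl; congr (_ + _ + _); rewrite mulrA.
Qed.

Lemma opmulA A B X : opmul (opmul A B) X = opmul A (opmul B X).
Proof.
apply: functional_extensionality => i; apply: functional_extensionality => k.
rewrite /opmul; under eq_bigr do rewrite big_distrl.
rewrite exchange_big; apply: eq_bigr => j _; rewrite big_distrr.
apply: eq_bigr => l _ /=. by rewrite mulrA.
Qed.

Lemma opmul1l A : opmul opid A = A.
Proof.
apply: functional_extensionality => i; apply: functional_extensionality => k.
rewrite /opmul /opid (bigD1 i) //= eqxx mul1r big1 ?addr0 // => j /negPf.
by rewrite eq_sym => ->; rewrite mul0r.
Qed.

Lemma opmul1r A : opmul A opid = A.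
Proof.
apply: functional_extensionality => i; apply: functional_extensionality => k.
rewrite /opmul /opid (bigD1 k) //= eqxx mulr1 big1 ?addr0 // => j /negPf.
by move=> ->; rewrite mulr0.
Qed.

Lemma trace_nz P : optrace P != 0 -> exists i, P i i != 0.
Proof.
move=> Htr; case: (pickP (fun i => P i i != 0)) => [i Hi|H]; first by exists i.
exfalso; move/negP: Htr; apply; rewrite /optrace big1 // => i _.
by move: (H i) => /negbFE/eqP.
Qed.
End L.
Section K.
Variables (M N : nat) (A : op R (V2 M)) (B : op R (V2 N)).

Lemma eig_tens P Q a b :
  (forall i k, opmul A P i k = a * P i k) -> (forall i k, opmul B Q i k = b * Q i k) ->
  (exists y, P y y != 0) -> (exists z, Q z z != 0) -> is_eigenvalue (tens A B) (a * b).
Proof.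
move=> HP HQ [y Hy] [z Hz].
exists (fun x : ('I_M*'I_N)*('I_M*'I_N) => P (x.1.1, x.2.1) y * Q (x.1.2, x.2.2) z); split.
  by exists ((y.1, z.1), (y.2, z.2)); rewrite /= -!surjective_pairing mulf_neq0.
move=> x.
transitivity (\sum_(j : ('I_M*'I_N)*('I_M*'I_N))
   (A (x.1.1, x.2.1) (j.1.1, j.2.1) * P (j.1.1, j.2.1) y) *
   (B (x.1.2, x.2.2) (j.1.2, j.2.2) * Q (j.1.2, j.2.2) z)).
  by apply: eq_bigr => j _; rewrite tensE mulrACA.
rewrite (sum_tens (fun w => A (x.1.1, x.2.1) w * P w y) (fun w => B (x.1.2, x.2.2) w * Q w z)).
have := HP (x.1.1, x.2.1) y; rewrite /opmul => ->.
have := HQ (x.1.2, x.2.2) z; rewrite /opmul => ->.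
by rewrite mulrACA.
Qed.

Lemma eig_kill P Q a b l (v : ('I_M*'I_N)*('I_M*'I_N) -> R) :
  (forall i k, opmul P A i k = a * P i k) -> (forall i k, opmul Q B i k = b * Q i k) ->
  (forall i, \sum_j tens A B i j * v j = l * v i) -> l != a * b ->
  forall x, \sum_j tens P Q x j * v j = 0.
Proof.
move=> HP HQ Hv Hl x.
set S := \sum_j tens P Q x j * v j.
have e1 : \sum_j opmul (tens P Q) (tens A B) x j * v j = a * b * S.
  rewrite /S big_distrr; apply: eq_bigr => j _ /=.
  by rewrite tens_mul !tensE HP HQ mulrACA !mulrA.
have e2 : \sum_j opmul (tens P Q) (tens A B) x j * v j = l * S.
  rewrite /S big_distrr /=; under eq_bigr do rewrite /opmul big_distrl.
  rewrite exchange_big; apply: eq_bigr => m _ /=.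
  rewrite mulrCA -Hv big_distrr; apply: eq_bigr => jj _ /=.
  by rewrite mulrA.
have : (a * b - l) * S = 0 by rewrite mulrBl -e1 -e2 subrr.
by move/eqP; rewrite mulf_eq0 subr_eq0 eq_sym (negbTE Hl) => /eqP.
Qed.
End K.
Lemma tens_id M N (P1 P2 : op R (V2 M)) (Q1 Q2 Q3 : op R (V2 N)) x j :
  (forall i k, P1 i k + P2 i k = opid i k) ->
  (forall i k, Q1 i k + Q2 i k + Q3 i k = opid i k) ->
  tens P1 Q1 x j + tens P1 Q2 x j + tens P1 Q3 x j +
  tens P2 Q1 x j + tens P2 Q2 x j + tens P2 Q3 x j = (x == j)%:R.
Proof.
move=> HP HQ; rewrite !tensE.
have -> : forall a1 a2 c1 c2 c3 : R, a1 * c1 + a1 * c2 + a1 * c3 + a2 * c1 + a2 * c2 + a2 * c3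
  = (a1 + a2) * (c1 + c2 + c3) by move=> *; ring.
rewrite HP HQ /opid -natrM mulnb.
case: x => [[x1 x2] [x3 x4]]; case: j => [[j1 j2] [j3 j4]] /=.
by rewrite !xpair_eqE andbACA.
Qed.

Lemma fam2 I (P1 P2 A : op R I) a1 a2 :
  proj_family2 P1 P2 -> (forall i j, A i j = a1 * P1 i j + a2 * P2 i j) ->
  [/\ forall i k, opmul P1 A i k = a1 * P1 i k, forall i k, opmul P2 A i k = a2 * P2 i k,
      forall i k, opmul A P1 i k = a1 * P1 i k & forall i k, opmul A P2 i k = a2 * P2 i k].
Proof.
case=> h11 h22 h12 h21 _ HA; split=> i k.
- by rewrite (lin2r _ HA) h11 h12 /opzero mulr0 addr0.
- by rewrite (lin2r _ HA) h22 h21 /opzero mulr0 add0r.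
- by rewrite (lin2l _ HA) h11 h21 /opzero mulr0 addr0.
- by rewrite (lin2l _ HA) h22 h12 /opzero mulr0 add0r.
Qed.

Lemma fam3 I (P1 P2 P3 A : op R I) a1 a2 a3 :
  proj_family3 P1 P2 P3 -> (forall i j, A i j = a1 * P1 i j + a2 * P2 i j + a3 * P3 i j) ->
  [/\ forall i k, opmul P1 A i k = a1 * P1 i k, forall i k, opmul P2 A i k = a2 * P2 i k,
      forall i k, opmul P3 A i k = a3 * P3 i k,
      [/\ forall i k, opmul A P1 i k = a1 * P1 i k, forall i k, opmul A P2 i k = a2 * P2 i k
      & forall i k, opmul A P3 i k = a3 * P3 i k] &
      forall i k, P1 i k + P2 i k + P3 i k = opid i k].
Proof.
case=> h11 h22 h33 [h12 [h21 [h13 [h31 [h23 h32]]]]] hs HA; split; [| | |split|]; try move=> i k.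
- by rewrite (lin3r _ HA) h11 h12 h13 /opzero !mulr0 !addr0.
- by rewrite (lin3r _ HA) h22 h21 h23 /opzero !mulr0 addr0 add0r.
- by rewrite (lin3r _ HA) h33 h31 h32 /opzero !mulr0 !add0r.
- by rewrite (lin3l _ HA) h11 h21 h31 /opzero !mulr0 !addr0.
- by rewrite (lin3l _ HA) h22 h12 h32 /opzero !mulr0 addr0 add0r.
- by rewrite (lin3l _ HA) h33 h13 h23 /opzero !mulr0 !add0r.
- by rewrite (pw hs).
Qed.

Lemma key M N (P1 P2 A : op R (V2 M)) (Q1 Q2 Q3 B : op R (V2 N)) a1 a2 b1 b2 b3 :
  proj_family2 P1 P2 -> proj_family3 Q1 Q2 Q3 ->
  (forall i j, A i j = a1 * P1 i j + a2 * P2 i j) ->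
  (forall i j, B i j = b1 * Q1 i j + b2 * Q2 i j + b3 * Q3 i j) ->
  (exists y, P1 y y != 0) -> (exists y, P2 y y != 0) ->
  (exists y, Q1 y y != 0) -> (exists y, Q2 y y != 0) -> (exists y, Q3 y y != 0) ->
  forall l, is_eigenvalue (tens A B) l <->
    l \in [:: a1 * b1; a1 * b2; a1 * b3; a2 * b1; a2 * b2; a2 * b3].
Proof.
move=> hP hQ HA HB n1 n2 m1 m2 m3 l.
have hPs := hP; case: hPs => _ _ _ _ hsP.
case: (fam2 hP HA) => p1A p2A Ap1 Ap2.
case: (fam3 hQ HB) => q1B q2B q3B [Bq1 Bq2 Bq3] hsQ.
split; last first.
  rewrite !inE; move=> H.
  repeat (case/orP: H => [/eqP ->|H]; first by apply: eig_tens).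
  by move/eqP: H => ->; apply: eig_tens.
case=> v [[i0 Hi0] Hv].
case: (boolP (l \in _)) => // Hn; exfalso.
rewrite !inE in Hn.
move/norP: Hn => [h1 /norP [h2 /norP [h3 /norP [h4 /norP [h5 h6]]]]].
have k11 := eig_kill p1A q1B Hv h1.
have k12 := eig_kill p1A q2B Hv h2.
have k13 := eig_kill p1A q3B Hv h3.
have k21 := eig_kill p2A q1B Hv h4.
have k22 := eig_kill p2A q2B Hv h5.
have k23 := eig_kill p2A q3B Hv h6.
move/negP: Hi0; apply; apply/eqP.
have -> : v i0 = \sum_j (i0 == j)%:R * v j.
  rewrite (bigD1 i0) //= eqxx mul1r big1 ?addr0 // => j /negPf.
  by rewrite eq_sym => ->; rewrite mul0r.
under eq_bigr do rewrite -(tens_id _ _ (pw hsP) hsQ) !mulrDl.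
by rewrite !big_split /= k11 k12 k13 k21 k22 k23 !addr0.
Qed.
Lemma qz_ne1 (q : R) (z : int) : 0 < q -> q != 1 -> z != 0 -> q ^ z != 1.
Proof.
move=> q0 q1; case: z => n Hn.
  have hn : (0 < n)%N by case: n Hn.
  by rewrite /= pexpr_eq1 // ltW.
have -> : q ^ Negz n = (q ^+ n.+1)^-1 by [].
by rewrite invr_eq1 pexpr_eq1 // ltW.
Qed.

Lemma q2_ne (q : R) : 0 < q -> q != 1 -> q ^+ 2 != q ^- 2.
Proof.
move=> q0 q1; apply/eqP => h.
have : q ^+ 4 == 1.
  rewrite (_ : 4 = 2 + 2)%N // exprD {1}h mulVf // expf_neq0 // gt_eqF //.
by rewrite pexpr_eq1 // ?ltW // (negbTE q1).
Qed.

Lemma no_weyl I (A : op R I) : two_neg_eigenvalues A -> ~ lemma1_weyl_condition A.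
Proof.
case=> l1 [l2 [h12 n1 n2 e1 e2]] [l0 [_ Hu]].
move: h12; rewrite -(Hu l1) ?(Hu l2) ?eqxx //.
Qed.

Lemma no_cliff I (A : op R I) : two_pos_eigenvalues A -> ~ lemma1_clifford_condition A.
Proof.
case=> l1 [l2 [h12 n1 n2 e1 e2]] [l0 [_ Hu]].
move: h12; rewrite -(Hu l1) ?(Hu l2) ?eqxx //.
Qed.
End S.

Unset Implicit Arguments.

Theorem mainTheorem9 (R : realFieldType) (k : qgroup) (q : R) (M N : nat)
    (Ps Pa Pt : op R (V2 N)) (Rh : op R (V2 N))
    (PS PA : op R (V2 M)) (RM RMinv : op R (V2 M)) :
    0 < q -> q != 1 -> (2 <= M)%N -> dim_ok k N ->
    (* braid matrix of G_q = SO_q(N) resp. Sp_q(n) *)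
    proj_family3 Ps Pa Pt ->
    optrace Ps = (rank_s k N)%:R -> optrace Pa = (rank_a k N)%:R ->
    optrace Pt = 1 ->
    Rh = (fun i j => q * Ps i j - q^-1 * Pa i j
                     + qsgn R k * q ^ (1 - (N : int)) * Pt i j) ->
    (* braid matrix of SL_q(M) and its inverse *)
    proj_family2 PS PA ->
    optrace PS = ((M * M.+1) %/ 2)%:R -> optrace PA = ((M * M.-1) %/ 2)%:R ->
    RM = (fun i j => q * PS i j - q^-1 * PA i j) ->
    opmul RMinv RM = opid -> opmul RM RMinv = opid ->
    let Tp := tens RM Rh in
    let Tm := tens RMinv Rh in
    [/\ forall l, is_eigenvalue Tp l <->
           l \in [:: q ^+ 2; q ^- 2; -1; qsgn R k * q ^ (2 - (N : int));
                     - qsgn R k * q ^ (- (N : int))],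
        forall l, is_eigenvalue Tm l <->
           l \in [:: - q ^+ 2; - q ^- 2; 1; - qsgn R k * q ^ (2 - (N : int));
                     qsgn R k * q ^ (- (N : int))],
        two_pos_eigenvalues Tp /\ two_neg_eigenvalues Tp,
        two_pos_eigenvalues Tm /\ two_neg_eigenvalues Tm &
        [/\ ~ lemma1_weyl_condition Tp, ~ lemma1_clifford_condition Tp,
            ~ lemma1_weyl_condition Tm & ~ lemma1_clifford_condition Tm]].
Proof.
move=> q0 q1 M2 dk hQ trs tra trt HRh hP trS trA HRM Hi1 Hi2 Tp Tm.
have qn0 : q != 0 by rewrite gt_eqF.
have nz : forall I (P : op R I) n, optrace P = n%:R -> (n != 0)%N -> exists y, P y y != 0.
  by move=> I P n h hn; apply: trace_nz; rewrite h pnatr_eq0.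
have nS : exists y, PS y y != 0 by apply: nz trS _; nia.
have nA : exists y, PA y y != 0 by apply: nz trA _; nia.
have ns : exists y, Ps y y != 0.
  by apply: nz trs _; case: (k) dk => /= [H|[n [H ->]]]; nia.
have na : exists y, Pa y y != 0.
  by apply: nz tra _; case: (k) dk => /= [H|[n [H ->]]]; nia.
have nt : exists y, Pt y y != 0 by apply: nz 1%N trt _.
have N0 : (N != 0)%N by case: (k) dk => /= [H|[n [H ->]]]; nia.
set s := qsgn R k.
set c := s * q ^ (1 - (N:int)).
have HB : forall i j, Rh i j = q * Ps i j + (- q^-1) * Pa i j + c * Pt i j.
  by move=> i j; rewrite HRh mulNr.
have HA : forall i j, RM i j = q * PS i j + (- q^-1) * PA i j.
  by move=> i j; rewrite HRM mulNr.
have HX : forall i j, RMinv i j = q^-1 * PS i j + (- q) * PA i j.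
  pose X : op R (V2 M) := fun i j => q^-1 * PS i j + (- q) * PA i j.
  have HX' : forall i j, X i j = q^-1 * PS i j + (- q) * PA i j by [].
  have XR : opmul X RM = opid.
    apply: functional_extensionality => i; apply: functional_extensionality => j.
    case: (fam2 hP HA) => p1 p2 _ _.
    rewrite (lin2l _ HX') p1 p2 !mulrA mulVf // mulrNN mulfV // !mul1r.
    by case: hP => _ _ _ _ /pw ->.
  have -> : RMinv = X by rewrite -[RMinv]opmul1l -XR opmulA Hi2 opmul1r.
  by [].
have KP := key hP hQ HA HB nS nA ns na nt.
have KM := key hP hQ HX HB nS nA ns na nt.
have e2 : q ^ (2 - (N:int)) = q * q ^ (1 - (N:int)).
  have -> : (2 - (N:int)) = 1 + (1 - (N:int)) by ring.
  by rewrite expfzDr.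
have eN : q ^ (- (N:int)) = q^-1 * q ^ (1 - (N:int)).
  rewrite -[in LHS](_ : -1 + (1 - (N:int)) = - (N:int)); last by ring.
  by rewrite expfzDr // exprN1.
have EP : forall l, is_eigenvalue Tp l <->
           l \in [:: q ^+ 2; q ^- 2; -1; s * q ^ (2 - (N : int));
                     - s * q ^ (- (N : int))].
  move=> l; apply: (iff_trans (KP l)).
  have -> : q * q = q ^+ 2 by rewrite expr2.
  have -> : q * - q^-1 = -1 by rewrite mulrN mulfV.
  have -> : q * c = s * q ^ (2 - (N:int)) by rewrite e2 /c; ring.
  have -> : - q^-1 * q = -1 by rewrite mulNr mulVf.
  have -> : - q^-1 * - q^-1 = q ^- 2 by rewrite mulrNN expr2 invfM.
  have -> : - q^-1 * c = - s * q ^ (- (N:int)) by rewrite eN /c; ring.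
  rewrite !inE; move: (l == q ^+ 2) (l == -1) (l == s * q ^ (2 - (N:int))) (l == q ^- 2) (l == - s * q ^ (- (N:int))).
  by do 5!case; split.
have EM : forall l, is_eigenvalue Tm l <->
           l \in [:: - q ^+ 2; - q ^- 2; 1; - s * q ^ (2 - (N : int));
                     s * q ^ (- (N : int))].
  move=> l; apply: (iff_trans (KM l)).
  have -> : q^-1 * q = 1 by rewrite mulVf.
  have -> : q^-1 * - q^-1 = - q ^- 2 by rewrite mulrN expr2 invfM.
  have -> : q^-1 * c = s * q ^ (- (N:int)) by rewrite eN /c; ring.
  have -> : - q * q = - q ^+ 2 by rewrite mulNr expr2.
  have -> : - q * - q^-1 = 1 by rewrite mulrNN mulfV.
  have -> : - q * c = - s * q ^ (2 - (N:int)) by rewrite e2 /c; ring.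
  rewrite !inE; move: (l == - q ^+ 2) (l == 1) (l == s * q ^ (- (N:int))) (l == - q ^- 2) (l == - s * q ^ (2 - (N:int))).
  by do 5!case; split.
have q2p : 0 < q ^+ 2 by rewrite exprn_gt0.
have q2m : 0 < q ^- 2 by rewrite invr_gt0 exprn_gt0.
have q2n := q2_ne q0 q1.
have zN : q ^ (- (N:int)) != 1 by apply: qz_ne1 => //; lia.
have pN : 0 < q ^ (- (N:int)) by rewrite exprz_gt0.
have p2N : 0 < q ^ (2 - (N:int)) by rewrite exprz_gt0.
have posP : two_pos_eigenvalues Tp.
  exists (q ^+ 2), (q ^- 2); split => //; apply/EP; by rewrite !inE eqxx ?orbT.
have negM : two_neg_eigenvalues Tm.
  exists (- q ^+ 2), (- q ^- 2); split; rewrite ?oppr_lt0 ?eqr_opp //;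
    apply/EM; by rewrite !inE eqxx ?orbT.
have negP : two_neg_eigenvalues Tp.
  move: EP EM; rewrite /s; case: (k) dk => [H|[n [H HN]]] EP EM.
  - exists (-1), (- qsgn R SOq * q ^ (- (N:int))); split.
    + by rewrite /qsgn mulN1r eqr_opp eq_sym.
    + by rewrite oppr_lt0.
    + by rewrite /qsgn mulN1r oppr_lt0.
    + by apply/EP; rewrite !inE eqxx ?orbT.
    + by apply/EP; rewrite !inE eqxx ?orbT.
  - have z2 : q ^ (2 - (N:int)) != 1 by apply: qz_ne1 => //; rewrite HN; lia.
    exists (-1), (qsgn R Spq * q ^ (2 - (N:int))); split.
    + by rewrite /qsgn mulN1r eqr_opp eq_sym.
    + by rewrite oppr_lt0.
    + by rewrite /qsgn mulN1r oppr_lt0.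
    + by apply/EP; rewrite !inE eqxx ?orbT.
    + by apply/EP; rewrite !inE eqxx ?orbT.
have posM : two_pos_eigenvalues Tm.
  move: EP EM; rewrite /s; case: (k) dk => [H|[n [H HN]]] EP EM.
  - exists 1, (qsgn R SOq * q ^ (- (N:int))); split.
    + by rewrite /qsgn mul1r eq_sym.
    + by [].
    + by rewrite /qsgn mul1r.
    + by apply/EM; rewrite !inE eqxx ?orbT.
    + by apply/EM; rewrite !inE eqxx ?orbT.
  - have z2 : q ^ (2 - (N:int)) != 1 by apply: qz_ne1 => //; rewrite HN; lia.
    exists 1, (- qsgn R Spq * q ^ (2 - (N:int))); split.
    + by rewrite /qsgn opprK mul1r eq_sym.
    + by [].
    + by rewrite /qsgn opprK mul1r.
    + by apply/EM; rewrite !inE eqxx ?orbT.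
    + by apply/EM; rewrite !inE eqxx ?orbT.
split => //; split; [exact: no_weyl | exact: no_cliff | exact: no_weyl | exact: no_cliff].
Qed.
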